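(* Let $\Omega\subset\mathbb{R}^2$ be open, $\lambda>0$, and let $u\in L^2(\Omega)$ satisfy $-\Delta u=\lambda u$ in $\Omega$. Let $\mathbf{x}_0\in\Omega$, $h>0$, $\alpha\in(0,1)$, and let $\mathbf{e}^-,\mathbf{e}^+$ be unit vectors with angle $\alpha\pi$ from $\mathbf{e}^-$ to $\mathbf{e}^+$; put $\Gamma^\pm=\{\mathbf{x}_0+t\mathbf{e}^\pm:0\le t\le h\}\subset\Omega$. Suppose $\Gamma^+$ is a generalized singular line of $u$ with constant parameter $\eta_2\equiv C_2$, and $\Gamma^-$ is a nodal line of $u$ ($u=0$ on $\Gamma^-$). Let $n\in\mathbb{N}$, $n\ge2$. If $\alpha\neq\frac{2q+1}{2p}$ for all integers $p,q$ with $1\le p\le n-1$ and $0\le q\le p-1$, then $u$ vanishes up to the order $n$ at $\mathbf{x}_0$, i.e. all partial derivatives of $u$ of order at most $n-1$ vanish at $\mathbf{x}_0$.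
   Context: No boundary condition is imposed on $\partial\Omega$; $u$ is real-analytic in $\Omega$. A line segment $\Gamma\subset\Omega$ is a generalized singular line with parameter $\eta$ (a complex-valued function not identically zero; here a nonzero complex constant) if $\partial_\nu u+\eta u=0$ on $\Gamma$, $\nu$ a unit normal to $\Gamma$. ''Vanishes up to order $n$'' means every homogeneous term of degree $<n$ in the Taylor expansion of $u$ at $\mathbf{x}_0$ vanishes. *)

(* Defs.v *)
From Stdlib Require Import Reals Lra List.
From Coquelicot Require Import Coquelicot.
Open Scope R_scope.

Definition dx (f : R -> R -> R) : R -> R -> R :=
  fun x y => Derive (fun t => f t y) x.
Definition dy (f : R -> R -> R) : R -> R -> R :=
  fun x y => Derive (fun t => f x t) y.

(* Iterated partial derivative: [false] = d/dx, [true] = d/dy;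
   the list records the order of differentiation (innermost first). *)
Fixpoint pderiv (l : list bool) (f : R -> R -> R) : R -> R -> R :=
  match l with
  | nil => f
  | b :: l' => pderiv l' (if b then dy f else dx f)
  end.

Definition ure (u : R -> R -> C) : R -> R -> R := fun x y => Re (u x y).
Definition uim (u : R -> R -> C) : R -> R -> R := fun x y => Im (u x y).

Definition cdx (u : R -> R -> C) : R -> R -> C :=
  fun x y => (dx (ure u) x y, dx (uim u) x y).
Definition cdy (u : R -> R -> C) : R -> R -> C :=
  fun x y => (dy (ure u) x y, dy (uim u) x y).

Definition smooth_on (Om : R * R -> Prop) (u : R -> R -> C) : Prop :=
  forall (l : list bool) (p : R * R), Om p ->
    differentiable_pt (pderiv l (ure u)) (fst p) (snd p) /\
    differentiable_pt (pderiv l (uim u)) (fst p) (snd p).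

Definition laplacian (u : R -> R -> C) : R -> R -> C :=
  fun x y => (dx (dx (ure u)) x y + dy (dy (ure u)) x y,
              dx (dx (uim u)) x y + dy (dy (uim u)) x y).

Definition helmholtz_on (Om : R * R -> Prop) (lam : R) (u : R -> R -> C) : Prop :=
  forall p : R * R, Om p ->
    Copp (laplacian u (fst p) (snd p)) = Cmult (RtoC lam) (u (fst p) (snd p)).

Definition segment (x0 e : R * R) (h : R) : R * R -> Prop :=
  fun p => exists t, 0 <= t <= h /\ p = (fst x0 + t * fst e, snd x0 + t * snd e).

Definition normal_deriv (nu : R * R) (u : R -> R -> C) : R -> R -> C :=
  fun x y => Cplus (Cmult (RtoC (fst nu)) (cdx u x y))
                   (Cmult (RtoC (snd nu)) (cdy u x y)).

Definition gen_singular_line (Gam : R * R -> Prop) (nu : R * R) (eta : C)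
    (u : R -> R -> C) : Prop :=
  eta <> RtoC 0 /\
  forall p, Gam p ->
    Cplus (normal_deriv nu u (fst p) (snd p)) (Cmult eta (u (fst p) (snd p))) = RtoC 0.

Definition nodal_line (Gam : R * R -> Prop) (u : R -> R -> C) : Prop :=
  forall p, Gam p -> u (fst p) (snd p) = RtoC 0.

Definition vanishes_up_to_order (n : nat) (u : R -> R -> C) (x0 : R * R) : Prop :=
  forall l : list bool, (length l < n)%nat ->
    pderiv l (ure u) (fst x0) (snd x0) = 0 /\
    pderiv l (uim u) (fst x0) (snd x0) = 0.

Definition rot (th : R) (e : R * R) : R * R :=
  (cos th * fst e - sin th * snd e, sin th * fst e + cos th * snd e).

(* Main.v *)
Require Import Defs.
From Stdlib Require Import Reals List Permutation Lra Lia ZArith.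
From Coquelicot Require Import Coquelicot.
Open Scope R_scope.

Definition lin (a : R) (G1 : R -> R -> R) (b : R) (G2 : R -> R -> R) : R -> R -> R :=
  fun x y => a * G1 x y + b * G2 x y.
Definition Dv (v : R * R) (G : R -> R -> R) : R -> R -> R :=
  lin (fst v) (dx G) (snd v) (dy G).
Definition Dl (w : list (R * R)) (G : R -> R -> R) : R -> R -> R :=
  fold_left (fun H v => Dv v H) w G.
Definition eqOm (Om : R * R -> Prop) (G1 G2 : R -> R -> R) : Prop :=
  forall x y, Om (x, y) -> G1 x y = G2 x y.
Definition Psm (Om : R * R -> Prop) (G : R -> R -> R) : Prop :=
  forall l x y, Om (x, y) -> differentiable_pt (pderiv l G) x y.

Lemma loc_Om (Om : R * R -> Prop) x y :
  open Om -> Om (x, y) -> locally_2d (fun u v => Om (u, v)) x y.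
Proof.
  intros HO H. apply locally_2d_locally.
  specialize (HO (x, y) H).
  eapply filter_imp; [|exact HO]. intros [u v] Hz. exact Hz.
Qed.

Lemma dx_ext Om G1 G2 : open Om -> eqOm Om G1 G2 -> eqOm Om (dx G1) (dx G2).
Proof.
  intros HO He x y Hxy. unfold dx. apply Derive_ext_loc.
  apply (locally_2d_1d_const_y (fun u v => G1 u v = G2 u v)).
  eapply locally_2d_impl; [|exact (loc_Om Om x y HO Hxy)].
  apply locally_2d_forall. intros u v H. now apply He.
Qed.

Lemma dy_ext Om G1 G2 : open Om -> eqOm Om G1 G2 -> eqOm Om (dy G1) (dy G2).
Proof.
  intros HO He x y Hxy. unfold dy. apply Derive_ext_loc.
  apply (locally_2d_1d_const_x (fun u v => G1 u v = G2 u v)).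
  eapply locally_2d_impl; [|exact (loc_Om Om x y HO Hxy)].
  apply locally_2d_forall. intros u v H. now apply He.
Qed.

Lemma pderiv_ext Om l : open Om -> forall G1 G2, eqOm Om G1 G2 ->
  eqOm Om (pderiv l G1) (pderiv l G2).
Proof.
  intros HO. induction l as [|b l IH]; intros G1 G2 He; simpl.
  - exact He.
  - apply IH. destruct b; [apply dy_ext|apply dx_ext]; auto.
Qed.

Lemma diff_ex_derive G x y : differentiable_pt G x y ->
  ex_derive (fun t => G t y) x /\ ex_derive (fun t => G x t) y.
Proof.
  intros [lx [ly H]]. split.
  - exists (lx * 1 + ly * 0). apply is_derive_Reals.
    apply (derivable_pt_lim_comp_2d G (fun t => t) (fun _ => y) x lx ly 1 0 H).
    + apply derivable_pt_lim_id.
    + apply derivable_pt_lim_const.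
  - exists (lx * 0 + ly * 1). apply is_derive_Reals.
    apply (derivable_pt_lim_comp_2d G (fun _ => x) (fun t => t) y lx ly 0 1 H).
    + apply derivable_pt_lim_const.
    + apply derivable_pt_lim_id.
Qed.

Lemma diff_lin a b G1 G2 x y : differentiable_pt G1 x y -> differentiable_pt G2 x y ->
  differentiable_pt (lin a G1 b G2) x y.
Proof.
  intros [l1x [l1y H1]] [l2x [l2y H2]].
  exists (a * l1x + b * l2x), (a * l1y + b * l2y).
  apply (differentiable_pt_lim_comp (fun u v => a * u + b * v) G1 G2 x y a b).
  - intros eps. exists eps. intros u v _ _.
    replace (a * u + b * v - (a * G1 x y + b * G2 x y) - (a * (u - G1 x y) + b * (v - G2 x y))) with 0 by ring.
    rewrite Rabs_R0. apply Rmult_le_pos. left; apply cond_pos.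
    apply Rle_trans with (Rabs (u - G1 x y)); [apply Rabs_pos|apply Rmax_l].
  - exact H1.
  - exact H2.
Qed.

Lemma diff_ext_loc G1 G2 x y : locally_2d (fun u v => G1 u v = G2 u v) x y ->
  differentiable_pt G1 x y -> differentiable_pt G2 x y.
Proof.
  intros He [lx [ly H]]. exists lx, ly. eapply differentiable_pt_lim_ext; eauto.
Qed.

Lemma Psm_dx Om G : Psm Om G -> Psm Om (dx G).
Proof. intros H l. exact (H (false :: l)). Qed.
Lemma Psm_dy Om G : Psm Om G -> Psm Om (dy G).
Proof. intros H l. exact (H (true :: l)). Qed.

Lemma dx_lin Om a b G1 G2 : Psm Om G1 -> Psm Om G2 ->
  eqOm Om (dx (lin a G1 b G2)) (lin a (dx G1) b (dx G2)).
Proof.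
  intros P1 P2 x y Hxy. unfold dx, lin.
  destruct (diff_ex_derive G1 x y (P1 nil x y Hxy)) as [E1 _].
  destruct (diff_ex_derive G2 x y (P2 nil x y Hxy)) as [E2 _].
  rewrite Derive_plus.
  - rewrite !Derive_scal. reflexivity.
  - apply ex_derive_scal. exact E1.
  - apply ex_derive_scal. exact E2.
Qed.

Lemma dy_lin Om a b G1 G2 : Psm Om G1 -> Psm Om G2 ->
  eqOm Om (dy (lin a G1 b G2)) (lin a (dy G1) b (dy G2)).
Proof.
  intros P1 P2 x y Hxy. unfold dy, lin.
  destruct (diff_ex_derive G1 x y (P1 nil x y Hxy)) as [_ E1].
  destruct (diff_ex_derive G2 x y (P2 nil x y Hxy)) as [_ E2].
  rewrite Derive_plus.
  - rewrite !Derive_scal. reflexivity.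
  - apply ex_derive_scal. exact E1.
  - apply ex_derive_scal. exact E2.
Qed.

Lemma lin_ext Om a b G1 G2 H1 H2 : eqOm Om G1 H1 -> eqOm Om G2 H2 ->
  eqOm Om (lin a G1 b G2) (lin a H1 b H2).
Proof. intros E1 E2 x y H. unfold lin. rewrite E1, E2; auto. Qed.

Lemma eqOm_trans Om G1 G2 G3 : eqOm Om G1 G2 -> eqOm Om G2 G3 -> eqOm Om G1 G3.
Proof. intros A B x y H. rewrite A; auto. Qed.

Lemma pderiv_lin Om l : open Om -> forall a b G1 G2, Psm Om G1 -> Psm Om G2 ->
  eqOm Om (pderiv l (lin a G1 b G2)) (lin a (pderiv l G1) b (pderiv l G2)).
Proof.
  intros HO. induction l as [|bb l IH]; intros a b G1 G2 P1 P2; simpl.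
  - intros x y _; reflexivity.
  - destruct bb.
    + eapply eqOm_trans. apply pderiv_ext; auto. apply dy_lin; auto.
      apply IH; apply Psm_dy; auto.
    + eapply eqOm_trans. apply pderiv_ext; auto. apply dx_lin; auto.
      apply IH; apply Psm_dx; auto.
Qed.

Lemma Psm_lin Om a b G1 G2 : open Om -> Psm Om G1 -> Psm Om G2 -> Psm Om (lin a G1 b G2).
Proof.
  intros HO P1 P2 l x y Hxy.
  apply (diff_ext_loc (lin a (pderiv l G1) b (pderiv l G2))).
  - eapply locally_2d_impl; [|exact (loc_Om Om x y HO Hxy)].
    apply locally_2d_forall. intros u v H. symmetry. exact (pderiv_lin Om l HO a b G1 G2 P1 P2 u v H).
  - apply diff_lin; auto.
Qed.

Lemma Psm_Dv Om v G : open Om -> Psm Om G -> Psm Om (Dv v G).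
Proof. intros HO P. apply Psm_lin; auto. apply Psm_dx; auto. apply Psm_dy; auto. Qed.

Lemma Psm_Dl Om w : open Om -> forall G, Psm Om G -> Psm Om (Dl w G).
Proof.
  intros HO. induction w as [|v w IH]; intros G P; simpl. exact P.
  apply IH. apply Psm_Dv; auto.
Qed.

Lemma Dv_ext Om v G1 G2 : open Om -> eqOm Om G1 G2 -> eqOm Om (Dv v G1) (Dv v G2).
Proof. intros HO E. apply lin_ext. apply dx_ext; auto. apply dy_ext; auto. Qed.

Lemma Dl_ext Om w : open Om -> forall G1 G2, eqOm Om G1 G2 -> eqOm Om (Dl w G1) (Dl w G2).
Proof.
  intros HO. induction w as [|v w IH]; intros G1 G2 E; simpl. exact E.
  apply IH. apply Dv_ext; auto.
Qed.

Lemma Dv_lin Om v a b G1 G2 : Psm Om G1 -> Psm Om G2 ->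
  eqOm Om (Dv v (lin a G1 b G2)) (lin a (Dv v G1) b (Dv v G2)).
Proof.
  intros P1 P2 x y H. unfold Dv. unfold lin at 1.
  rewrite (dx_lin Om a b G1 G2 P1 P2 x y H), (dy_lin Om a b G1 G2 P1 P2 x y H).
  unfold lin. ring.
Qed.

Lemma Dl_lin Om w : open Om -> forall a b G1 G2, Psm Om G1 -> Psm Om G2 ->
  eqOm Om (Dl w (lin a G1 b G2)) (lin a (Dl w G1) b (Dl w G2)).
Proof.
  intros HO. induction w as [|v w IH]; intros a b G1 G2 P1 P2; simpl.
  - intros x y _; reflexivity.
  - eapply eqOm_trans. apply Dl_ext; auto. apply Dv_lin; auto.
    apply IH; apply Psm_Dv; auto.
Qed.

Lemma schwarz_Om Om G : open Om -> Psm Om G -> eqOm Om (dx (dy G)) (dy (dx G)).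
Proof.
  intros HO P x y Hxy. unfold dx, dy.
  apply Schwarz.
  - eapply locally_2d_impl; [|exact (loc_Om Om x y HO Hxy)].
    apply locally_2d_forall. intros u v H.
    destruct (diff_ex_derive G u v (P nil u v H)) as [A B].
    destruct (diff_ex_derive (dy G) u v (P (true::nil) u v H)) as [C _].
    destruct (diff_ex_derive (dx G) u v (P (false::nil) u v H)) as [_ E].
    repeat split; assumption.
  - apply differentiable_continuity_pt. exact (P (true::false::nil) x y Hxy).
  - apply differentiable_continuity_pt. exact (P (false::true::nil) x y Hxy).
Qed.

Lemma Dv_comm Om v w G : open Om -> Psm Om G ->
  eqOm Om (Dv v (Dv w G)) (Dv w (Dv v G)).
Proof.
  intros HO P x y H.
  change (fst v * dx (lin (fst w) (dx G) (snd w) (dy G)) x y + snd v * dy (lin (fst w) (dx G) (snd w) (dy G)) x y = fst w * dx (lin (fst v) (dx G) (snd v) (dy G)) x y + snd w * dy (lin (fst v) (dx G) (snd v) (dy G)) x y).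
  rewrite (dx_lin Om _ _ _ _ (Psm_dx Om G P) (Psm_dy Om G P) x y H).
  rewrite (dy_lin Om _ _ _ _ (Psm_dx Om G P) (Psm_dy Om G P) x y H).
  rewrite (dx_lin Om _ _ _ _ (Psm_dx Om G P) (Psm_dy Om G P) x y H).
  rewrite (dy_lin Om _ _ _ _ (Psm_dx Om G P) (Psm_dy Om G P) x y H).
  unfold lin. rewrite (schwarz_Om Om G HO P x y H). ring.
Qed.

Lemma Dl_perm Om w w' : open Om -> Permutation w w' -> forall G, Psm Om G ->
  eqOm Om (Dl w G) (Dl w' G).
Proof.
  intros HO Hp. induction Hp; intros G P; simpl.
  - intros x y _; reflexivity.
  - apply IHHp. apply Psm_Dv; auto.
  - apply Dl_ext; auto. apply Dv_comm; auto.
  - eapply eqOm_trans. apply IHHp1; auto. apply IHHp2; auto.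
Qed.

Lemma Dl_app w1 w2 G : Dl (w1 ++ w2) G = Dl w2 (Dl w1 G).
Proof. unfold Dl. apply fold_left_app. Qed.

Definition ev (b : bool) : R * R := if b then (0, 1) else (1, 0).

Lemma pderiv_Dl Om l : open Om -> forall G, eqOm Om (pderiv l G) (Dl (map ev l) G).
Proof.
  intros HO. induction l as [|b l IH]; intros G; simpl.
  - intros x y _; reflexivity.
  - eapply eqOm_trans. apply IH. apply Dl_ext; auto.
    intros x y _. unfold Dv, lin, ev. destruct b; simpl; ring.
Qed.

Definition sel (a b : R * R) (bb : bool) : R * R := if bb then b else a.

Lemma expand Om (a b : R * R) (ca cb : R * R -> R)
  (hdec : forall v, fst v = ca v * fst a + cb v * fst b /\ snd v = ca v * snd a + cb v * snd b)
  (HO : open Om) pre v post G : Psm Om G ->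
  eqOm Om (Dl (pre ++ v :: post) G)
    (lin (ca v) (Dl (pre ++ a :: post) G) (cb v) (Dl (pre ++ b :: post) G)).
Proof.
  intros P. rewrite !Dl_app. simpl.
  set (K := Dl pre G).
  assert (PK : Psm Om K) by (apply Psm_Dl; auto).
  eapply eqOm_trans.
  - apply Dl_ext; auto.
    instantiate (1 := lin (ca v) (Dv a K) (cb v) (Dv b K)).
    intros x y _. unfold Dv, lin. destruct (hdec v) as [E1 E2].
    rewrite E1, E2. ring.
  - apply Dl_lin; auto; apply Psm_Dv; auto.
Qed.

Lemma ext_gen Om (a b : R * R) (ca cb : R * R -> R)
  (hdec : forall v, fst v = ca v * fst a + cb v * fst b /\ snd v = ca v * snd a + cb v * snd b)
  (HO : open Om) G x0 (Hx0 : Om x0) (P : Psm Om G) (T : list (R * R) -> R)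
  (Tlin : forall pre v post, T (pre ++ v :: post) =
      ca v * T (pre ++ a :: post) + cb v * T (pre ++ b :: post))
  m (Hbasis : forall bs, length bs = m -> Dl (map (sel a b) bs) G (fst x0) (snd x0) = T (map (sel a b) bs)) :
  forall w, length w = m -> Dl w G (fst x0) (snd x0) = T w.
Proof.
  assert (Hx0' : Om (fst x0, snd x0)) by (destruct x0; exact Hx0).
  assert (Main : forall post bs, (length bs + length post = m)%nat ->
    Dl (map (sel a b) bs ++ post) G (fst x0) (snd x0) = T (map (sel a b) bs ++ post)).
  { induction post as [|v post IH]; intros bs Hl.
    - rewrite !app_nil_r. apply Hbasis. simpl in Hl. lia.
    - rewrite (expand Om a b ca cb hdec HO _ v post G P _ _ Hx0'). rewrite Tlin.
      unfold lin.
      replace (map (sel a b) bs ++ a :: post) with (map (sel a b) (bs ++ false :: nil) ++ post)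
        by (rewrite map_app, <- app_assoc; reflexivity).
      replace (map (sel a b) bs ++ b :: post) with (map (sel a b) (bs ++ true :: nil) ++ post)
        by (rewrite map_app, <- app_assoc; reflexivity).
      rewrite !IH; [reflexivity| |]; rewrite length_app; simpl in *; lia. }
  intros w Hw. apply (Main w nil). simpl; lia.
Qed.

Lemma line_deriv H (x0 e : R * R) t :
  differentiable_pt H (fst x0 + t * fst e) (snd x0 + t * snd e) ->
  derivable_pt_lim (fun s => H (fst x0 + s * fst e) (snd x0 + s * snd e)) t
    (Dv e H (fst x0 + t * fst e) (snd x0 + t * snd e)).
Proof.
  intros [lx [ly D]].
  destruct (differentiable_pt_lim_unique _ _ _ _ _ D) as [E1 E2].
  unfold Dv, lin. fold (dx H (fst x0 + t * fst e) (snd x0 + t * snd e)) in E1.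
  fold (dy H (fst x0 + t * fst e) (snd x0 + t * snd e)) in E2.
  rewrite E1, E2.
  replace (fst e * lx + snd e * ly) with (lx * fst e + ly * snd e) by ring.
  apply (derivable_pt_lim_comp_2d H (fun s => fst x0 + s * fst e) (fun s => snd x0 + s * snd e)); auto.
  - apply is_derive_Reals. auto_derive; auto. ring.
  - apply is_derive_Reals. auto_derive; auto. ring.
Qed.

Lemma ray Om G (x0 e : R * R) h : open Om -> Psm Om G -> 0 < h ->
  (forall t, 0 <= t <= h -> Om (fst x0 + t * fst e, snd x0 + t * snd e)) ->
  (forall t, 0 <= t <= h -> G (fst x0 + t * fst e) (snd x0 + t * snd e) = 0) ->
  forall k, Dl (repeat e k) G (fst x0) (snd x0) = 0.
Proof.
  intros HO P Hh HOm HG.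
  assert (Inner : forall k t, 0 < t < h -> Dl (repeat e k) G (fst x0 + t * fst e) (snd x0 + t * snd e) = 0).
  { induction k as [|k IH]; intros t Ht.
    - simpl. apply HG. lra.
    - assert (E : repeat e (S k) = repeat e k ++ e :: nil) by (symmetry; rewrite <- repeat_cons; reflexivity).
      rewrite E, Dl_app. simpl.
      set (K := Dl (repeat e k) G).
      assert (PK : Psm Om K) by (apply Psm_Dl; auto).
      pose proof (line_deriv K x0 e t (PK nil _ _ (HOm t ltac:(lra)))) as D1.
      assert (D2 : derivable_pt_lim (fun s => K (fst x0 + s * fst e) (snd x0 + s * snd e)) t 0).
      { apply is_derive_Reals.
        apply (is_derive_ext_loc (fun _ => 0)).
        - assert (Hp : 0 < Rmin t (h - t)) by (apply Rmin_glb_lt; lra).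
          exists (mkposreal _ Hp). intros s Hs.
          change (Rabs (s - t) < Rmin t (h - t)) in Hs.
          apply Rabs_def2 in Hs. destruct Hs as [Hs1 Hs2].
          pose proof (Rmin_l t (h - t)). pose proof (Rmin_r t (h - t)).
          symmetry. apply IH. lra.
        - auto_derive; auto. }
      exact (uniqueness_limite _ _ _ _ D1 D2). }
  intros k.
  set (K := Dl (repeat e k) G).
  assert (PK : Psm Om K) by (apply Psm_Dl; auto).
  set (phi := fun s => K (fst x0 + s * fst e) (snd x0 + s * snd e)).
  assert (C : continuity_pt phi 0).
  { apply derivable_continuous_pt. eexists. apply line_deriv.
    apply (PK nil). apply HOm. lra. }
  assert (E0 : phi 0 = K (fst x0) (snd x0)) by (unfold phi; f_equal; ring).
  rewrite <- E0.
  destruct (Req_dec (phi 0) 0) as [Z|NZ]; [exact Z|exfalso].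
  unfold continuity_pt, continue_in, limit1_in, limit_in in C.
  destruct (C (Rabs (phi 0)) (Rabs_pos_lt _ NZ)) as [alp [Halp Hc]].
  set (s := Rmin (alp / 2) (h / 2)).
  assert (Hs : 0 < s) by (apply Rmin_glb_lt; lra).
  assert (Hs1 : s <= alp / 2) by apply Rmin_l.
  assert (Hs2 : s <= h / 2) by apply Rmin_r.
  specialize (Hc s). simpl in Hc. unfold R_dist in Hc.
  assert (Z : phi s = 0) by (apply Inner; lra).
  rewrite Z in Hc.
  assert (Habs : Rabs (0 - phi 0) < Rabs (phi 0)).
  { apply Hc. split. split; [exact I| lra]. rewrite Rminus_0_r, Rabs_right; lra. }
  rewrite Rabs_minus_sym, Rminus_0_r in Habs. lra.
Qed.

Fixpoint cnt (bs : list bool) : nat :=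
  match bs with nil => 0%nat | true :: r => S (cnt r) | false :: r => cnt r end.

Fixpoint ipow (k : nat) : C :=
  match k with O => (1, 0) | S k => Cmult (0, 1) (ipow k) end.

Lemma cnt_perm bs bs' : Permutation bs bs' -> cnt bs = cnt bs'.
Proof.
  intros Hp; induction Hp; simpl; auto.
  - destruct x; simpl; auto.
  - destruct x, y; simpl; auto.
  - congruence.
Qed.

Lemma cnt_pos bs : (1 <= cnt bs)%nat -> exists r, Permutation bs (true :: r).
Proof.
  induction bs as [|x bs IH]; simpl; intros H. lia.
  destruct x.
  - exists bs. apply Permutation_refl.
  - destruct (IH H) as [r Hr]. exists (false :: r).
    eapply perm_trans. apply perm_skip. exact Hr. apply perm_swap.
Qed.

Lemma cnt0 bs : cnt bs = 0%nat -> bs = repeat false (length bs).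
Proof.
  induction bs as [|x bs IH]; simpl; intros H; auto.
  destruct x. lia. f_equal. auto.
Qed.

Lemma Im_ipow2 k : Im (ipow (S (S k))) = - Im (ipow k).
Proof. simpl. destruct (ipow k) as [p q]. unfold Cmult, Im; simpl. ring. Qed.

Definition Zw (ca cb : R * R -> R) (w : list (R * R)) : C :=
  fold_right (fun v z => Cmult (ca v, cb v) z) (1, 0) w.

Lemma Zw_app ca cb l1 l2 : Zw ca cb (l1 ++ l2) = Cmult (Zw ca cb l1) (Zw ca cb l2).
Proof.
  induction l1 as [|v l1 IH]; simpl.
  - destruct (Zw ca cb l2) as [p q]. unfold Cmult; simpl. f_equal; ring.
  - rewrite IH. destruct (Zw ca cb l1) as [p q]; destruct (Zw ca cb l2) as [p' q'].
    unfold Cmult; simpl. f_equal; ring.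
Qed.

Lemma Zw_repeat ca cb e th m : ca e = cos th -> cb e = sin th ->
  Zw ca cb (repeat e m) = (cos (INR m * th), sin (INR m * th)).
Proof.
  intros H1 H2. induction m as [|m IH]; simpl.
  - rewrite Rmult_0_l, cos_0, sin_0. reflexivity.
  - rewrite IH, H1, H2. unfold Cmult; simpl.
    replace (match m with O => 1 | S _ => INR m + 1 end) with (INR (S m)) by reflexivity.
    rewrite S_INR. replace ((INR m + 1) * th) with (th + INR m * th) by ring.
    rewrite cos_plus, sin_plus. f_equal; ring.
Qed.

Lemma DvDv Om v w F : Psm Om F -> forall x y, Om (x, y) ->
  Dv v (Dv w F) x y = fst v * fst w * dx (dx F) x y + fst v * snd w * dx (dy F) x y
    + snd v * fst w * dy (dx F) x y + snd v * snd w * dy (dy F) x y.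
Proof.
  intros P x y H.
  change (fst v * dx (lin (fst w) (dx F) (snd w) (dy F)) x y + snd v * dy (lin (fst w) (dx F) (snd w) (dy F)) x y = fst v * fst w * dx (dx F) x y + fst v * snd w * dx (dy F) x y
    + snd v * fst w * dy (dx F) x y + snd v * snd w * dy (dy F) x y).
  rewrite (dx_lin Om _ _ _ _ (Psm_dx Om F P) (Psm_dy Om F P) x y H).
  rewrite (dy_lin Om _ _ _ _ (Psm_dx Om F P) (Psm_dy Om F P) x y H).
  unfold lin. ring.
Qed.

Lemma step Om lam F (x0 a : R * R) th N : open Om -> Psm Om F -> Om x0 ->
  fst a ^ 2 + snd a ^ 2 = 1 ->
  (forall x y, Om (x, y) -> dx (dx F) x y + dy (dy F) x y = - lam * F x y) ->
  (forall w, (length w < N)%nat -> Dl w F (fst x0) (snd x0) = 0) ->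
  Dl (repeat a N) F (fst x0) (snd x0) = 0 ->
  Dl (rot (PI / 2) (rot th a) :: repeat (rot th a) (N - 1)) F (fst x0) (snd x0) = 0 ->
  cos (INR N * th) <> 0 -> (1 <= N)%nat ->
  forall w, length w = N -> Dl w F (fst x0) (snd x0) = 0.
Proof.
  intros HO P Hx0 Hcs Hhelm IH Hnod Hrob Hcos HN.
  assert (Hx0' : Om (fst x0, snd x0)) by (destruct x0; exact Hx0).
  set (b := (- snd a, fst a)).
  set (ca := fun v : R * R => fst v * fst a + snd v * snd a).
  set (cb := fun v : R * R => fst v * fst b + snd v * snd b).
  assert (hdec : forall v, fst v = ca v * fst a + cb v * fst b /\ snd v = ca v * snd a + cb v * snd b).
  { intros v. unfold ca, cb, b; simpl. split.
    - transitivity (fst v * (fst a ^ 2 + snd a ^ 2)); [rewrite Hcs; ring|ring].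
    - transitivity (snd v * (fst a ^ 2 + snd a ^ 2)); [rewrite Hcs; ring|ring]. }
  assert (Ha : (ca a, cb a) = (1, 0)).
  { unfold ca, cb, b; simpl. f_equal. rewrite <- Hcs; ring. ring. }
  assert (Hb : (ca b, cb b) = (0, 1)).
  { unfold ca, cb, b; simpl. f_equal. ring. rewrite <- Hcs; ring. }
  set (g := fun bs => Dl (map (sel a b) bs) F (fst x0) (snd x0)).
  assert (gperm : forall bs bs', Permutation bs bs' -> g bs = g bs').
  { intros bs bs' Hp. unfold g. exact (Dl_perm Om _ _ HO ltac:(apply Permutation_map; exact Hp) F P _ _ Hx0'). }
  assert (harm : forall r, (length r + 2 = N)%nat -> g (false :: false :: r) + g (true :: true :: r) = 0).
  { intros r Hr. unfold g. simpl. set (W := map (sel a b) r).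
    assert (E1 : Dl W (Dv a (Dv a F)) (fst x0) (snd x0) + Dl W (Dv b (Dv b F)) (fst x0) (snd x0)
       = Dl W (lin 1 (Dv a (Dv a F)) 1 (Dv b (Dv b F))) (fst x0) (snd x0)).
    { rewrite (Dl_lin Om W HO 1 1 _ _ (Psm_Dv Om a _ HO (Psm_Dv Om a F HO P)) (Psm_Dv Om b _ HO (Psm_Dv Om b F HO P)) _ _ Hx0').
      unfold lin; ring. }
    rewrite E1.
    assert (EL : eqOm Om (lin 1 (Dv a (Dv a F)) 1 (Dv b (Dv b F))) (lin (- lam) F 0 F)).
    { intros x y Hxy. unfold lin. rewrite !(DvDv Om _ _ F P x y Hxy).
      rewrite <- Hhelm by exact Hxy. unfold b; simpl.
      transitivity ((fst a ^ 2 + snd a ^ 2) * (dx (dx F) x y + dy (dy F) x y)); [ring|].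
      rewrite Hcs. ring. }
    rewrite (Dl_ext Om W HO _ _ EL _ _ Hx0').
    rewrite (Dl_lin Om W HO _ _ F F P P _ _ Hx0'). unfold lin.
    rewrite IH. ring. unfold W. rewrite length_map. lia. }
  set (B := g (true :: repeat false (N - 1))).
  assert (basis : forall k bs, (cnt bs <= k)%nat -> length bs = N -> g bs = B * Im (ipow (cnt bs))).
  { induction k as [|k IHk]; intros bs Hk Hl.
    - assert (C0 : cnt bs = 0%nat) by lia. rewrite C0. simpl. unfold Im; simpl.
      rewrite (cnt0 bs C0). unfold g. rewrite map_repeat, Hl. simpl. rewrite Hnod. ring.
    - destruct (Nat.eq_dec (cnt bs) 0) as [C0|C0].
      + apply IHk; lia.
      + destruct (cnt_pos bs ltac:(lia)) as [r Hr].
        pose proof (cnt_perm _ _ Hr) as Cr. simpl in Cr.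
        pose proof (Permutation_length Hr) as Lr. simpl in Lr.
        destruct (Nat.eq_dec (cnt r) 0) as [C1|C1].
        * rewrite (gperm _ _ Hr). rewrite Cr, C1. rewrite (cnt0 r C1).
          replace (length r) with (N - 1)%nat by lia. fold B. simpl. unfold Cmult, Im; simpl. ring.
        * destruct (cnt_pos r ltac:(lia)) as [r' Hr'].
          pose proof (cnt_perm _ _ Hr') as Cr'. simpl in Cr'.
          pose proof (Permutation_length Hr') as Lr'. simpl in Lr'.
          rewrite (gperm _ _ Hr), (gperm (true :: r) _ (perm_skip true Hr')).
          assert (Hh := harm r' ltac:(lia)).
          replace (g (true :: true :: r')) with (- g (false :: false :: r')) by lra.
          rewrite (IHk (false :: false :: r')) by (simpl; lia).
          rewrite Cr, Cr'. simpl cnt. rewrite Im_ipow2. ring. }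
  assert (all : forall w, length w = N -> Dl w F (fst x0) (snd x0) = B * Im (Zw ca cb w)).
  { apply (ext_gen Om a b ca cb hdec HO F x0 Hx0 P).
    - intros pre v post. rewrite !Zw_app. simpl. pose proof (f_equal fst Ha) as Ha1; pose proof (f_equal snd Ha) as Ha2; pose proof (f_equal fst Hb) as Hb1; pose proof (f_equal snd Hb) as Hb2; simpl in Ha1, Ha2, Hb1, Hb2. rewrite Ha1, Ha2, Hb1, Hb2. ring.
    - intros bs Hl. change (g bs = B * Im (Zw ca cb (map (sel a b) bs))). rewrite (basis (cnt bs) bs (le_n _) Hl).
      f_equal. f_equal. symmetry. clear - Ha Hb. induction bs as [|x bs IH]; simpl; auto.
      rewrite IH. destruct x; simpl; [rewrite Hb|rewrite Ha]; destruct (ipow (cnt bs)) as [p q];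
      unfold Cmult; simpl; f_equal; ring. }
  assert (HB : B = 0).
  { set (wR := rot (PI / 2) (rot th a) :: repeat (rot th a) (N - 1)).
    assert (L : length wR = N) by (unfold wR; simpl; rewrite repeat_length; lia).
    pose proof (all wR L) as E. fold wR in Hrob. rewrite Hrob in E.
    assert (Z1 : ca (rot th a) = cos th /\ cb (rot th a) = sin th).
    { unfold ca, cb, b, rot; simpl. split.
      - transitivity (cos th * (fst a ^ 2 + snd a ^ 2)); [ring|rewrite Hcs; ring].
      - transitivity (sin th * (fst a ^ 2 + snd a ^ 2)); [ring|rewrite Hcs; ring]. }
    destruct Z1 as [Z1 Z2].
    assert (Z3 : ca (rot (PI / 2) (rot th a)) = - sin th /\ cb (rot (PI / 2) (rot th a)) = cos th).
    { unfold ca, cb, b, rot; simpl. rewrite cos_PI2, sin_PI2. split.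
      - transitivity (- sin th * (fst a ^ 2 + snd a ^ 2)); [ring|rewrite Hcs; ring].
      - transitivity (cos th * (fst a ^ 2 + snd a ^ 2)); [ring|rewrite Hcs; ring]. }
    destruct Z3 as [Z3 Z4].
    unfold wR in E. simpl Zw in E. fold (Zw ca cb (repeat (rot th a) (N - 1))) in E.
    rewrite (Zw_repeat ca cb _ th (N - 1) Z1 Z2), Z3, Z4 in E.
    unfold Cmult, Im in E; simpl in E.
    replace (- sin th * sin (INR (N - 1) * th) + cos th * cos (INR (N - 1) * th))
      with (cos (th + INR (N - 1) * th)) in E by (rewrite cos_plus; ring).
    replace (th + INR (N - 1) * th) with (INR N * th) in E.
    2:{ assert (EN : INR N = INR (N - 1) + 1) by (rewrite <- S_INR; f_equal; lia). rewrite EN. ring. }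
    destruct (Rmult_integral _ _ (eq_sym E)) as [H|H]; [exact H|contradiction]. }
  intros w Hw. rewrite (all w Hw), HB. ring.
Qed.

Lemma cos_nz (alpha : R) (n M : nat) : 0 < alpha < 1 -> (1 <= M <= n - 1)%nat ->
  (forall p q : nat, (1 <= p <= n - 1)%nat -> (q <= p - 1)%nat ->
      alpha <> (2 * INR q + 1) / (2 * INR p)) ->
  cos (INR M * (alpha * PI)) <> 0.
Proof.
  intros Ha HM Hp Hc. destruct (cos_eq_0_0 _ Hc) as [k Hk].
  assert (HPI := PI_RGT_0).
  assert (HMp : 0 < INR M) by (apply lt_0_INR; lia).
  assert (E : INR M * alpha = IZR k + / 2).
  { apply Rmult_eq_reg_r with PI; [|lra]. rewrite Rmult_assoc, Hk. field. }
  assert (k0 : (0 <= k)%Z).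
  { assert (-1 < IZR k) by nra. apply lt_IZR in H. lia. }
  assert (kM : (k < Z.of_nat M)%Z).
  { assert (IZR k < INR M) by nra. rewrite INR_IZR_INZ in H. apply lt_IZR in H. lia. }
  apply (Hp M (Z.to_nat k)); [lia|lia|].
  rewrite INR_IZR_INZ, Z2Nat.id by lia.
  apply Rmult_eq_reg_l with (2 * INR M); [|lra].
  field_simplify; [|lra]. lra.
Qed.

Lemma pd_to_words Om F x0 m : open Om -> Om x0 -> Psm Om F ->
  (forall l, length l = m -> pderiv l F (fst x0) (snd x0) = 0) ->
  forall w, length w = m -> Dl w F (fst x0) (snd x0) = 0.
Proof.
  intros HO Hx0 P Hl.
  assert (Hx0' : Om (fst x0, snd x0)) by (destruct x0; exact Hx0).
  apply (ext_gen Om (1, 0) (0, 1) fst snd) with (T := fun _ => 0); auto.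
  - intros v. simpl. split; ring.
  - intros. ring.
  - intros bs Hb. replace (map (sel (1, 0) (0, 1)) bs) with (map ev bs).
    + rewrite <- (pderiv_Dl Om bs HO F _ _ Hx0'). apply Hl; auto.
    + apply map_ext. intros []; reflexivity.
Qed.

Theorem theorem3p5
  (Om : R * R -> Prop) (lam : R) (u : R -> R -> C)
  (x0 : R * R) (h alpha : R) (em : R * R) (C2 : C) (n : nat) :
  open Om ->
  0 < lam ->
  smooth_on Om u ->
  helmholtz_on Om lam u ->
  Om x0 ->
  0 < h ->
  0 < alpha < 1 ->
  fst em ^ 2 + snd em ^ 2 = 1 ->
  (forall p, segment x0 (rot (alpha * PI) em) h p -> Om p) ->
  (forall p, segment x0 em h p -> Om p) ->
  gen_singular_line (segment x0 (rot (alpha * PI) em) h)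
                    (rot (PI / 2) (rot (alpha * PI) em)) C2 u ->
  nodal_line (segment x0 em h) u ->
  (2 <= n)%nat ->
  (forall p q : nat, (1 <= p <= n - 1)%nat -> (q <= p - 1)%nat ->
      alpha <> (2 * INR q + 1) / (2 * INR p)) ->
  vanishes_up_to_order n u x0.
Proof.
  intros HO Hlam Hsm Hhelm Hx0 Hh Ha Hem Hsegp Hsegm [Heta Hrob] Hnod Hn Hpq.
  assert (Hx0' : Om (fst x0, snd x0)) by (destruct x0; exact Hx0).
  set (Fre := ure u). set (Fim := uim u).
  set (ep := rot (alpha * PI) em). set (nu := rot (PI / 2) ep).
  assert (Pre : Psm Om Fre) by (intros l x y H; exact (proj1 (Hsm l (x, y) H))).
  assert (Pim : Psm Om Fim) by (intros l x y H; exact (proj2 (Hsm l (x, y) H))).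
  assert (Hre : forall x y, Om (x, y) -> dx (dx Fre) x y + dy (dy Fre) x y = - lam * Fre x y).
  { intros x y H. pose proof (f_equal fst (Hhelm (x, y) H)) as E.
    unfold laplacian, Copp, Cmult, RtoC in E; simpl in E. unfold Fre. change (ure u x y) with (fst (u x y)). lra. }
  assert (Him : forall x y, Om (x, y) -> dx (dx Fim) x y + dy (dy Fim) x y = - lam * Fim x y).
  { intros x y H. pose proof (f_equal snd (Hhelm (x, y) H)) as E.
    unfold laplacian, Copp, Cmult, RtoC in E; simpl in E. unfold Fim. change (uim u x y) with (snd (u x y)). lra. }
  assert (segm : forall t, 0 <= t <= h -> segment x0 em h (fst x0 + t * fst em, snd x0 + t * snd em))
    by (intros t Ht; exists t; auto).
  assert (segp : forall t, 0 <= t <= h -> segment x0 ep h (fst x0 + t * fst ep, snd x0 + t * snd ep))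
    by (intros t Ht; exists t; auto).
  assert (nodre : forall k, Dl (repeat em k) Fre (fst x0) (snd x0) = 0).
  { apply (ray Om Fre x0 em h HO Pre Hh).
    - intros t Ht. apply Hsegm. auto.
    - intros t Ht. pose proof (f_equal fst (Hnod _ (segm t Ht))) as E. exact E. }
  assert (nodim : forall k, Dl (repeat em k) Fim (fst x0) (snd x0) = 0).
  { apply (ray Om Fim x0 em h HO Pim Hh).
    - intros t Ht. apply Hsegm. auto.
    - intros t Ht. pose proof (f_equal snd (Hnod _ (segm t Ht))) as E. exact E. }
  set (Hr := lin 1 (Dv nu Fre) 1 (lin (fst C2) Fre (- snd C2) Fim)).
  set (Hi := lin 1 (Dv nu Fim) 1 (lin (fst C2) Fim (snd C2) Fre)).
  assert (PHr : Psm Om Hr) by (apply Psm_lin; auto; [apply Psm_Dv|apply Psm_lin]; auto).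
  assert (PHi : Psm Om Hi) by (apply Psm_lin; auto; [apply Psm_Dv|apply Psm_lin]; auto).
  assert (robre : forall k, Dl (repeat ep k) Hr (fst x0) (snd x0) = 0).
  { apply (ray Om Hr x0 ep h HO PHr Hh).
    - intros t Ht. apply Hsegp. auto.
    - intros t Ht. pose proof (f_equal fst (Hrob _ (segp t Ht))) as E.
      etransitivity; [|exact E]. unfold Hr, lin, Dv, lin, normal_deriv, cdx, cdy, Cplus, Cmult, RtoC; simpl.
      unfold Fre, Fim, ure, uim, Re, Im. fold nu. ring. }
  assert (robim : forall k, Dl (repeat ep k) Hi (fst x0) (snd x0) = 0).
  { apply (ray Om Hi x0 ep h HO PHi Hh).
    - intros t Ht. apply Hsegp. auto.
    - intros t Ht. pose proof (f_equal snd (Hrob _ (segp t Ht))) as E.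
      etransitivity; [|exact E]. unfold Hi, lin, Dv, lin, normal_deriv, cdx, cdy, Cplus, Cmult, RtoC; simpl.
      unfold Fre, Fim, ure, uim, Re, Im. fold nu. ring. }
  assert (Main : forall N, (N < n)%nat -> forall l, (length l <= N)%nat ->
            pderiv l Fre (fst x0) (snd x0) = 0 /\ pderiv l Fim (fst x0) (snd x0) = 0).
  { induction N as [|N IH]; intros HN l Hl.
    - destruct l; [|simpl in Hl; lia]. simpl. split.
      + exact (nodre 0%nat).
      + exact (nodim 0%nat).
    - destruct (Nat.eq_dec (length l) (S N)) as [EL|EL].
      2:{ apply IH; lia. }
      assert (IHw : forall w, (length w < S N)%nat ->
         Dl w Fre (fst x0) (snd x0) = 0 /\ Dl w Fim (fst x0) (snd x0) = 0).
      { intros w Hw. split.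
        - apply (pd_to_words Om Fre x0 (length w) HO Hx0 Pre); auto.
          intros l' Hl'. apply (IH ltac:(lia) l' ltac:(lia)).
        - apply (pd_to_words Om Fim x0 (length w) HO Hx0 Pim); auto.
          intros l' Hl'. apply (IH ltac:(lia) l' ltac:(lia)). }
      assert (Hcos : cos (INR (S N) * (alpha * PI)) <> 0).
      { apply (cos_nz alpha n (S N)); auto. lia. }
      assert (LR : length (repeat ep (S N - 1)) = (S N - 1)%nat) by apply repeat_length.
      set (R0 := repeat ep (S N - 1)) in *.
      assert (Rre : Dl (nu :: R0) Fre (fst x0) (snd x0) = 0).
      { pose proof (robre (S N - 1)%nat) as E. fold R0 in E. unfold Hr in E.
        rewrite (Dl_lin Om R0 HO _ _ _ _ (Psm_Dv Om nu Fre HO Pre) (Psm_lin Om _ _ Fre Fim HO Pre Pim) _ _ Hx0') in E.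
        unfold lin at 1 in E.
        rewrite (Dl_lin Om R0 HO _ _ _ _ Pre Pim _ _ Hx0') in E. unfold lin in E.
        rewrite (proj1 (IHw R0 ltac:(lia))), (proj2 (IHw R0 ltac:(lia))) in E.
        simpl. lra. }
      assert (Rim : Dl (nu :: R0) Fim (fst x0) (snd x0) = 0).
      { pose proof (robim (S N - 1)%nat) as E. fold R0 in E. unfold Hi in E.
        rewrite (Dl_lin Om R0 HO _ _ _ _ (Psm_Dv Om nu Fim HO Pim) (Psm_lin Om _ _ Fim Fre HO Pim Pre) _ _ Hx0') in E.
        unfold lin at 1 in E.
        rewrite (Dl_lin Om R0 HO _ _ _ _ Pim Pre _ _ Hx0') in E. unfold lin in E.
        rewrite (proj1 (IHw R0 ltac:(lia))), (proj2 (IHw R0 ltac:(lia))) in E.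
        simpl. lra. }
      rewrite !(pderiv_Dl Om l HO _ _ _ Hx0').
      split.
      + apply (step Om lam Fre x0 em (alpha * PI) (S N) HO Pre Hx0 Hem Hre
                 (fun w Hw => proj1 (IHw w Hw)) (nodre (S N)) Rre Hcos ltac:(lia)).
        rewrite length_map. exact EL.
      + apply (step Om lam Fim x0 em (alpha * PI) (S N) HO Pim Hx0 Hem Him
                 (fun w Hw => proj2 (IHw w Hw)) (nodim (S N)) Rim Hcos ltac:(lia)).
        rewrite length_map. exact EL. }
  intros l Hl. apply (Main (length l)); auto.
Qed.
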